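(* Let $r\ge1$, $n$ be integers and let $\sigma:\mathbb{Z}_n\to\{0,1\}$ be a temporally periodic configuration. Then either every block $[i,j]\in B(\sigma)$ has length $|[i,j]|\le r$, or every block $[i,j]\in B(\sigma)$ has length $|[i,j]|>r$.
   Context: Cells are elements of $\mathbb{Z}_n$, arithmetic mod $n$; $[a,b]$ denotes the cyclic interval $a,a+1,\dots,b$ and $|[a,b]|$ its number of cells. The majority rule with radius $r$: $\mathrm{maj}_r(\sigma)(i)=0$ if among the cells of $[i-r,i+r]$ strictly more have value $0$ than value $1$ under $\sigma$, and $=1$ otherwise. $\sigma$ is temporally periodic if $\mathrm{maj}_r(\mathrm{maj}_r(\sigma))=\sigma$. For $\beta\in\{0,1\}$, $B^\beta(\sigma)$ is the set of maximal homogeneous blocks with value $\beta$: cell intervals $[i,j]$ with $\sigma(k)=\beta$ for all $k\in[i,j]$ and $\sigma(i-1)=\sigma(j+1)=1-\beta$; $B(\sigma)=B^0(\sigma)\cup B^1(\sigma)$. *)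

(* Defs.v *)
From mathcomp Require Import all_boot.
Set Implicit Arguments. Unset Strict Implicit. Unset Printing Implicit Defensive.

(* Cells are Z_N with N = n.+1 >= 1, represented as 'I_n.+1; a configuration
   is sigma : 'I_n.+1 -> bool (false = 0, true = 1). *)

Definition cell (n k : nat) : 'I_n.+1 := inord (k %% n.+1).

(* cell i - r + k  (note r * n = -r mod n.+1) *)
Definition wcell (n r : nat) (i : 'I_n.+1) (k : nat) : 'I_n.+1 :=
  cell n (i + r * n + k).

Definition zeros (n r : nat) (s : 'I_n.+1 -> bool) (i : 'I_n.+1) : nat :=
  \sum_(k < (2 * r).+1) (~~ s (wcell r i k)).

Definition ones (n r : nat) (s : 'I_n.+1 -> bool) (i : 'I_n.+1) : nat :=
  \sum_(k < (2 * r).+1) (s (wcell r i k) : nat).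

Definition maj (n r : nat) (s : 'I_n.+1 -> bool) : 'I_n.+1 -> bool :=
  fun i => ~~ (ones r s i < zeros r s i).

Definition temporally_periodic (n r : nat) (s : 'I_n.+1 -> bool) : Prop :=
  forall i, maj r (maj r s) i = s i.

(* |[i,j]| = number of cells of the cyclic interval i, i+1, ..., j *)
Definition ilen (n : nat) (i j : 'I_n.+1) : nat := ((j + n.+1 - i) %% n.+1).+1.

Definition is_block (n : nat) (s : 'I_n.+1 -> bool) (b : bool) (i j : 'I_n.+1) : Prop :=
  (forall k, k < ilen i j -> s (cell n (i + k)) = b) /\
  s (cell n (i + n)) = ~~ b /\ s (cell n (j + 1)) = ~~ b.

(* Main.v *)
Require Import Defs.
From mathcomp Require Import all_boot zify.
From Stdlib Require Import Classical.

Lemma cellE n x : (cell n x : nat) = x %% n.+1.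
Proof. by rewrite /cell inordK // ltn_pmod. Qed.

Lemma cell_eq n x y : x %% n.+1 = y %% n.+1 -> cell n x = cell n y.
Proof. by rewrite /cell => ->. Qed.

Lemma wcellE n r x k : r <= x -> wcell r (cell n x) k = cell n (x - r + k).
Proof.
move=> H; apply: cell_eq; rewrite cellE -addnA modnDml.
have -> : x + (r * n + k) = r * n.+1 + (x - r + k) by rewrite mulnS; lia.
by rewrite modnMDl.
Qed.

Lemma sum_ind N a c : a <= c ->
  \sum_(k < N) ((a <= k) && (k < c) : nat) = minn N c - minn N a.
Proof.
move=> ac; elim: N => [|N IH]; first by rewrite big_ord0; lia.
rewrite big_ord_recr /= IH.
case: (leqP a N) => h1; case: (ltnP N c) => h2 /=; lia.
Qed.

Section S.
Variables (n r : nat).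

Lemma maj_count (s : 'I_n.+1 -> bool) x b : r <= x ->
  r < \sum_(k < (2 * r).+1) (s (cell n (x - r + k)) == b) ->
  maj r s (cell n x) = b.
Proof.
move=> rx H; rewrite /maj /ones /zeros.
have E1 : \sum_(k < (2 * r).+1) (s (wcell r (cell n x) k) : nat) =
          \sum_(k < (2 * r).+1) (s (cell n (x - r + k)) : nat).
  by apply: eq_bigr => k _; rewrite wcellE.
have E2 : \sum_(k < (2 * r).+1) (~~ s (wcell r (cell n x) k) : nat) =
          \sum_(k < (2 * r).+1) (~~ s (cell n (x - r + k)) : nat).
  by apply: eq_bigr => k _; rewrite wcellE.
rewrite E1 E2.
have tot : \sum_(k < (2 * r).+1) (s (cell n (x - r + k)) : nat) +
           \sum_(k < (2 * r).+1) (~~ s (cell n (x - r + k)) : nat) = (2 * r).+1.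
  rewrite -big_split /=.
  rewrite (eq_bigr (fun _ => 1)); first by rewrite sum1_card card_ord.
  by move=> k _; case: (s _).
case: b H => H.
- have E3 : \sum_(k < (2 * r).+1) (s (cell n (x - r + k)) == true : nat) =
          \sum_(k < (2 * r).+1) (s (cell n (x - r + k)) : nat).
    by apply: eq_bigr => k _; case: (s _).
  rewrite E3 in H; apply/negP; lia.
- have E3 : \sum_(k < (2 * r).+1) (s (cell n (x - r + k)) == false : nat) =
          \sum_(k < (2 * r).+1) (~~ s (cell n (x - r + k)) : nat).
    by apply: eq_bigr => k _; case: (s _).
  rewrite E3 in H; apply/negbTE; rewrite negbK; lia.
Qed.

Lemma maj_interval (s : 'I_n.+1 -> bool) x b a : r <= x -> a <= r ->
  (forall u, u <= r -> s (cell n (x - r + (a + u))) = b) ->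
  maj r s (cell n x) = b.
Proof.
move=> rx ar H; apply: maj_count => //.
have L : \sum_(k < (2 * r).+1) ((a <= k) && (k < a + r.+1) : nat) <=
         \sum_(k < (2 * r).+1) (s (cell n (x - r + k)) == b).
  apply: leq_sum => k _.
  case: (boolP ((a <= k) && (k < a + r.+1))) => // /andP [h1 h2].
  have := H (k - a) ltac:(lia).
  by rewrite (_ : a + (k - a) = k :> nat) ?subnKC // => ->; rewrite eqxx.
rewrite sum_ind in L; last by lia.
lia.
Qed.

Lemma maj_two (s : 'I_n.+1 -> bool) x b m : r <= x -> 1 <= m <= r ->
  (forall u, u < r -> s (cell n (x - r + u)) = b) ->
  s (cell n (x + m)) = b ->
  maj r s (cell n x) = b.
Proof.
move=> rx hm H Hm; apply: maj_count => //.
have L : \sum_(k < (2 * r).+1) (((0 <= k) && (k < r) : nat) + ((r + m <= k) && (k < r + m + 1) : nat)) <=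
         \sum_(k < (2 * r).+1) (s (cell n (x - r + k)) == b).
  apply: leq_sum => k _.
  case: (boolP ((0 <= k) && (k < r))) => [/andP [_ h]|h].
    have -> : (r + m <= k) = false by lia.
    by rewrite (H k h) eqxx.
  case: (boolP ((r + m <= k) && (k < r + m + 1))) => // /andP [h1 h2].
  rewrite (_ : x - r + k = x + m); last by lia.
  by rewrite Hm eqxx.
have E := @sum_ind (2 * r).+1 0 r (leq0n r); rewrite /= in E.
rewrite big_split /= E sum_ind in L; last lia.
move: L; set S := \sum_(k < _) _; move=> L. lia.
Qed.
End S.

Section M.
Variables (n r : nat) (s : 'I_n.+1 -> bool).
Hypothesis HP : forall x, maj r (maj r s) x = s x.
Hypothesis r1 : 1 <= r.

Lemma step b p : r <= p ->
  (forall t, t <= r -> s (cell n (p + t)) = b) ->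
  s (cell n (p + r + 1)) != b ->
  forall m, 1 <= m <= r -> s (cell n (p + r + 1 + m)) != b.
Proof.
move=> rp Hb Hn m hm; apply/negP => /eqP Hm.
have T1 : forall t, t < r -> maj r s (cell n (p + 1 + t)) = b.
  move=> t ht; apply: (@maj_interval n r s _ b (r.-1 - t)); [lia|lia|] => u hu.
  rewrite (_ : p + 1 + t - r + (r.-1 - t + u) = p + u); [exact: Hb | lia].
have T2 : maj r s (cell n (p + r + 1)) = b.
  apply: (@maj_two n r s _ b m); [lia|lia| |].
    move=> u hu; rewrite (_ : p + r + 1 - r + u = p + (u + 1)); [apply: Hb; lia | lia].
  by rewrite Hm.
have := HP (cell n (p + r + 1)).
rewrite (@maj_interval n r (maj r s) _ b 0); [|lia|lia|].
  by move=> E; rewrite -E eqxx in Hn.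
move=> u hu; case: (ltnP u r) => h.
  rewrite (_ : p + r + 1 - r + (0 + u) = p + 1 + u); [exact: T1 | lia].
rewrite (_ : p + r + 1 - r + (0 + u) = p + r + 1); [exact: T2 | lia].
Qed.

Definition W p := exists b, forall t, t <= r -> s (cell n (p + t)) = b.

Lemma Wstep p : r <= p -> W p -> W p.+1 \/ W (p + r + 1).
Proof.
move=> rp [b Hb].
case: (boolP (s (cell n (p + r + 1)) == b)) => [/eqP E|E].
  left; exists b => t ht; case: (ltnP t r) => h.
    rewrite (_ : p.+1 + t = p + t.+1); [apply: Hb; lia | lia].
  by rewrite (_ : p.+1 + t = p + r + 1); [exact: E | lia].
right; exists (~~ b) => t ht; case: (posnP t) => [->|h].
  by rewrite addn0; move: E; clear Hb; case: (s _); case: b.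
have := @step b p rp Hb E t ltac:(lia).
by clear Hb E; case: (s _); case: b.
Qed.

Lemma Wall p : r <= p -> W p ->
  forall d x, p <= x <= p + d -> exists q, [/\ p <= q, q <= x, x <= q + r & W q].
Proof.
move=> rp Wp; elim => [|d IH] x hx.
  by exists p; split => //; lia.
case: (leqP x (p + d)) => h.
  by apply: IH; lia.
have [q [h1 h2 h3 Wq]] := IH (p + d) ltac:(lia).
case: (leqP x (q + r)) => h4.
  by exists q; split => //; lia.
case: (@Wstep q ltac:(lia) Wq) => W'.
  by exists q.+1; split => //; lia.
by exists (q + r + 1); split => //; lia.
Qed.
End M.

Lemma no_mix (r n : nat) (s : 'I_n.+1 -> bool) b i j b2 i2 j2 :
  1 <= r -> temporally_periodic r s ->
  is_block s b i j -> r < ilen i j ->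
  is_block s b2 i2 j2 -> ilen i2 j2 <= r -> False.
Proof.
move=> r1 HP [B1 _] hl [B2 [Bl Br]] hs.
set N := n.+1.
set p0 := i + r * N.
have rp : r <= p0 by rewrite /p0 /N mulnS; lia.
have Wp : W n r s p0.
  exists b => t ht.
  rewrite -(B1 t); last by lia.
  congr s; apply: cell_eq.
  by rewrite /p0 addnAC addnC modnMDl.
set P := (p0 + 1) * N.
set x := i2 + P.
have hx : p0 < x by rewrite /x /P /N addn1 mulSn; lia.
have [q [h1 h2 h3 [c Wq]]] := @Wall n r s HP r1 p0 rp Wp (x - p0) x ltac:(lia).
have fx : s (cell n x) = b2.
  rewrite -(B2 0) //; congr s; apply: cell_eq.
  by rewrite /x /P addnC modnMDl addn0.
have fx1 : s (cell n (x - 1)) = ~~ b2.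
  rewrite -Bl; congr s; apply: cell_eq.
  rewrite (_ : x - 1 = p0 * N + (i2 + n)); first by rewrite modnMDl.
  move: hx; rewrite /x /P /N addn1 mulSn; lia.
set m := ilen i2 j2.
have fxm : s (cell n (x + m)) = ~~ b2.
  rewrite -Br; congr s; apply: cell_eq.
  rewrite /m /ilen -/N.
  have i2N : i2 < N := ltn_ord i2.
  have j2N : j2 < N := ltn_ord j2.
  case: (leqP i2 j2) => hij.
    rewrite (_ : j2 + N - i2 = (j2 - i2) + N); last by lia.
    rewrite modnDr.
    have -> : (j2 - i2) %% N = j2 - i2 by apply: modn_small; lia.
    rewrite (_ : x + (j2 - i2).+1 = P + (j2 + 1)); last by rewrite /x; lia.
    by rewrite /P modnMDl.
  have -> : (j2 + N - i2) %% N = j2 + N - i2 by apply: modn_small; lia.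
  rewrite (_ : x + (j2 + N - i2).+1 = P + (j2 + 1 + N)); last by rewrite /x; lia.
  by rewrite /P modnMDl modnDr.
have m1 : 1 <= m by [].
case: (ltnP q x) => hq.
  have e1 := Wq (x - 1 - q) ltac:(lia).
  have e2 := Wq (x - q) ltac:(lia).
  rewrite (_ : q + (x - 1 - q) = x - 1) in e1; last by lia.
  rewrite (_ : q + (x - q) = x) in e2; last by lia.
  by move: fx fx1; rewrite e1 e2 => ->; clear; case: b2.
have e1 := Wq m ltac:(lia).
have e2 := Wq 0 ltac:(lia).
rewrite (_ : q + m = x + m) in e1; last by lia.
rewrite (_ : q + 0 = x) in e2; last by lia.
by move: fx fxm; rewrite e1 e2 => ->; clear; case: b2.
Qed.

Theorem claim6 (r n : nat) (s : 'I_n.+1 -> bool) :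
  1 <= r -> temporally_periodic r s ->
  (forall (b : bool) (i j : 'I_n.+1), is_block s b i j -> ilen i j <= r) \/
  (forall (b : bool) (i j : 'I_n.+1), is_block s b i j -> r < ilen i j).
Proof.
move=> r1 HP.
case: (classic (exists b i j, is_block s b i j /\ r < ilen i j)) => [[b [i [j [Hb Hl]]]]|N].
  right => b2 i2 j2 H2; rewrite ltnNge; apply/negP => hs.
  exact: (@no_mix r n s b i j b2 i2 j2 r1 HP Hb Hl H2 hs).
left => b i j H; rewrite leqNgt; apply/negP => hl.
by apply: N; exists b, i, j.
Qed.
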